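(* Let $\alpha,\beta,\lambda,\varepsilon_1,\varepsilon_2$ be positive real numbers and consider the planar system $$s'=s\big(\varepsilon_2-\beta-\varepsilon_2 s+(\varepsilon_1-\varepsilon_2-\lambda)i\big),\qquad i'=i\big(\varepsilon_2-\varepsilon_1-\alpha+(\lambda-\varepsilon_2)s+(\varepsilon_1-\varepsilon_2)i\big)$$ on $D_1=\{(s,i): s\ge0,\ i\ge0,\ s+i\le1\}$. Let $T_0=\varepsilon_2-\beta$ and $T_1=\varepsilon_2-\varepsilon_1-\alpha$. If $T_0<0$ and $T_1<0$, then the origin is the only rest point of this system in $D_1$.
   Context: This is the special case $b=\beta_1=\gamma=0$ (with $\beta=\beta_2$) of the SIRS proportions system reduced to the $(s,i)$-plane. *)

(* Defs.v *)
From Stdlib Require Import Reals.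
Open Scope R_scope.

Definition sdot (alpha beta lambda eps1 eps2 s i : R) : R :=
  s * (eps2 - beta - eps2 * s + (eps1 - eps2 - lambda) * i).

Definition idot (alpha beta lambda eps1 eps2 s i : R) : R :=
  i * (eps2 - eps1 - alpha + (lambda - eps2) * s + (eps1 - eps2) * i).

Definition in_D1 (s i : R) : Prop := 0 <= s /\ 0 <= i /\ s + i <= 1.

Definition rest_point (alpha beta lambda eps1 eps2 s i : R) : Prop :=
  sdot alpha beta lambda eps1 eps2 s i = 0 /\
  idot alpha beta lambda eps1 eps2 s i = 0.

(* Main.v *)
Require Import Defs.
From Stdlib Require Import Reals Lra Psatz.
Open Scope R_scope.

Theorem proposition3p1 (alpha beta lambda eps1 eps2 : R)
  (Halpha : 0 < alpha) (Hbeta : 0 < beta) (Hlambda : 0 < lambda)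
  (Heps1 : 0 < eps1) (Heps2 : 0 < eps2)
  (HT0 : eps2 - beta < 0) (HT1 : eps2 - eps1 - alpha < 0) :
  rest_point alpha beta lambda eps1 eps2 0 0 /\
  (forall s i : R, in_D1 s i ->
     rest_point alpha beta lambda eps1 eps2 s i -> s = 0 /\ i = 0).
Proof.
  split.
  { unfold rest_point, sdot, idot; split; ring. }
  intros s i [Hs [Hi Hsi]] [E1 E2]. unfold sdot, idot in *.
  destruct (Rmult_integral _ _ E1) as [Hs0|F1];
  destruct (Rmult_integral _ _ E2) as [Hi0|F2]; try (split; assumption).
  - exfalso. subst s.
    destruct (Rle_or_lt eps1 eps2).
    + nra.
    + assert ((eps1 - eps2) * i <= (eps1 - eps2)) by nra. lra.
  - exfalso. subst i. assert (0 <= eps2 * s) by nra. lra.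
  - exfalso.
    destruct (Req_dec s 0) as [->|Hs1].
    + destruct (Rle_or_lt eps1 eps2).
      * nra.
      * assert ((eps1 - eps2) * i <= (eps1 - eps2)) by nra. lra.
    + destruct (Req_dec i 0) as [->|Hi1].
      * assert (0 <= eps2 * s) by nra. lra.
      * assert (Hsp : 0 < s) by lra. assert (Hip : 0 < i) by lra.
        set (u := 1 - s - i).
        assert (A1 : (eps1 - lambda) * i = beta - eps2 * u) by (unfold u; lra).
        assert (A2 : (eps1 - lambda) * s = - alpha - (eps1 - eps2) * u) by (unfold u; lra).
        assert (Hu : 0 <= u) by (unfold u; lra).
        assert (G1 : (eps1 - lambda) * i > eps2 * i).
        { assert (eps2 * u <= eps2) by nra.
          assert (eps2 * s > 0) by nra. unfold u in *. nra. }
        assert (Ha : eps1 - lambda > eps2) by nra.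
        assert ((eps1 - lambda) * s > 0) by nra.
        assert ((eps1 - eps2) * u >= 0) by nra.
        lra.
Qed.
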